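(* Let $(X,\beta)$ be a prechart. For all $x,y\in X$ and all $k\in\mathbb{N}$, $x\sim^{(k)}y$ if and only if $\mathsf{bd}_\beta(x,y)\le 2^{-k}$.
   Context: Fix a set $V=\{v_1,v_2,\dots\}$ of variables and a set $\Sigma$ of letters. A prechart is a pair $(X,\beta)$ with $\beta:X\to P_{\mathrm{fin}}(\Sigma\times X+V)$; write $x\xrightarrow{a}x'$ iff $(a,x')\in\beta(x)$, $x\rhd v$ iff $v\in\beta(x)$, and $E(x)=\beta(x)\cap V$. Stratified bisimilarity: $x\sim^{(0)}y$ always; $x\sim^{(n+1)}y$ iff $E(x)=E(y)$, every $x\xrightarrow{a}x'$ is matched by some $y\xrightarrow{a}y'$ with $x'\sim^{(n)}y'$, and symmetrically. A 1-bounded pseudometric on $X$ is $d:X\times X\to[0,1]$ with $d(x,x)=0$, symmetry and triangle inequality; $D_X$ is the set of these, ordered pointwise. For $d\in D_X$, $d^\uparrow$ on $\Sigma\times X+V$ is $d^\uparrow((a,x),(a,y))=\tfrac12 d(x,y)$, $d^\uparrow(m,n)=0$ if $m=n$, $1$ otherwise. $\mathcal H(d)(A,B)=\max\{\sup_{x\in A}\inf_{y\in B}d(x,y),\sup_{y\in B}\inf_{x\in A}d(y,x)\}$ with $\sup\emptyset=0$, $\inf\emptyset=1$. $\Phi_\beta(d)(x,y)=\mathcal H(d^\uparrow)(\beta(x),\beta(y))$, a monotone map on $D_X$; $\mathsf{bd}_\beta$ is its least fixpoint (so $\mathsf{bd}_\beta=\Phi_\beta(\mathsf{bd}_\beta)$).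 *)

(* Defs.v *)
From Stdlib Require Import Reals List ClassicalEpsilon Arith.
Import ListNotations.
Open Scope R_scope.

Section Prechart.
Variables (Sigma X : Type).

(* V = {v_1, v_2, ...} is represented by nat.
   A prechart is beta : X -> P_fin(Sigma x X + V); finite sets are
   represented by lists (membership via In; order/duplicates irrelevant). *)
Definition letter_or_var : Type := ((Sigma * X) + nat)%type.

Variable beta : X -> list letter_or_var.

Definition sameE (x y : X) : Prop :=
  forall v : nat, In (inr v) (beta x) <-> In (inr v) (beta y).

Fixpoint bisim (n : nat) (x y : X) : Prop :=
  match n with
  | O => True
  | S n' =>
      sameE x y /\
      (forall (a : Sigma) (x' : X), In (inl (a, x')) (beta x) ->
         exists y' : X, In (inl (a, y')) (beta y) /\ bisim n' x' y') /\
      (forall (a : Sigma) (y' : X), In (inl (a, y')) (beta y) ->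
         exists x' : X, In (inl (a, x')) (beta x) /\ bisim n' x' y')
  end.

Definition is_pm (d : X -> X -> R) : Prop :=
  (forall x y, 0 <= d x y <= 1) /\
  (forall x, d x x = 0) /\
  (forall x y, d x y = d y x) /\
  (forall x y z, d x z <= d x y + d y z).

Definition lift (d : X -> X -> R) (m n : letter_or_var) : R :=
  match m, n with
  | inl (a, x), inl (b, y) =>
      if excluded_middle_informative (a = b) then / 2 * d x y else 1
  | inr v, inr w => if Nat.eq_dec v w then 0 else 1
  | _, _ => 1
  end.

(* sup and inf over finite sets, with sup {} = 0, inf {} = 1 *)
Definition sup_list (l : list R) : R :=
  match l with [] => 0 | a :: t => fold_right Rmax a t end.
Definition inf_list (l : list R) : R :=
  match l with [] => 1 | a :: t => fold_right Rmin a t end.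

Definition hausdorff (e : letter_or_var -> letter_or_var -> R)
  (A B : list letter_or_var) : R :=
  Rmax (sup_list (map (fun m => inf_list (map (fun n => e m n) B)) A))
       (sup_list (map (fun n => inf_list (map (fun m => e n m) A)) B)).

Definition Phi (d : X -> X -> R) : X -> X -> R :=
  fun x y => hausdorff (lift d) (beta x) (beta y).

Definition is_lfp (d : X -> X -> R) : Prop :=
  is_pm d /\ (forall x y, Phi d x y = d x y) /\
  (forall d' : X -> X -> R, is_pm d' -> (forall x y, Phi d' x y = d' x y) ->
     forall x y, d x y <= d' x y).

Definition bd : X -> X -> R :=
  epsilon (inhabits (fun _ _ : X => 0)) is_lfp.

End Prechart.

Arguments bisim {Sigma X} beta n x y.
Arguments bd {Sigma X} beta _ _.

(* Main.v *)
Require Import Defs.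
From Stdlib Require Import Reals List Lra Lia ClassicalEpsilon Classical Arith.
Import ListNotations.
Open Scope R_scope.

Definition inS (a : R) : Prop := a = 0 \/ exists j, a = / 2 ^ j.

Lemma pow2_pos n : 0 < 2 ^ n.
Proof. apply pow_lt; lra. Qed.

Lemma inv2S n : / 2 ^ S n = / 2 * / 2 ^ n.
Proof. simpl. rewrite Rinv_mult. reflexivity. Qed.

Lemma inv2_pos n : 0 < / 2 ^ n.
Proof. apply Rinv_0_lt_compat, pow2_pos. Qed.

Lemma inv2_le1 n : / 2 ^ n <= 1.
Proof. induction n. simpl. rewrite Rinv_1. lra. rewrite inv2S. lra. Qed.

Lemma inv2_anti m n : (m <= n)%nat -> / 2 ^ n <= / 2 ^ m.
Proof. induction 1. lra. rewrite inv2S. pose proof (inv2_pos m0). lra. Qed.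

Lemma inS_lt a k : inS a -> a < / 2 ^ k -> a <= / 2 ^ S k.
Proof.
  intros [->|[j ->]] H. pose proof (inv2_pos (S k)); lra.
  destruct (le_lt_dec j k) as [h|h].
  - pose proof (inv2_anti _ _ h). lra.
  - apply inv2_anti; lia.
Qed.

Lemma inS_le a b : inS a -> inS b -> (forall k, b <= / 2 ^ k -> a <= / 2 ^ k) -> a <= b.
Proof.
  intros Ha [->|[j ->]] H.
  - destruct Ha as [->|[j ->]]. lra.
    exfalso. specialize (H (S j)). rewrite inv2S in H. pose proof (inv2_pos j).
    pose proof (inv2_pos (S j)). lra.
  - apply H. lra.
Qed.

Lemma inS_le1 a : inS a -> 0 <= a <= 1.
Proof. intros [->|[j ->]]. lra. pose proof (inv2_pos j); pose proof (inv2_le1 j); lra. Qed.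

Lemma Rmax_le_iff a b t : Rmax a b <= t <-> a <= t /\ b <= t.
Proof. unfold Rmax; destruct (Rle_dec a b); split; intros; lra. Qed.
Lemma Rmin_le_iff a b t : Rmin a b <= t <-> a <= t \/ b <= t.
Proof. unfold Rmin; destruct (Rle_dec a b); split; intros; lra. Qed.

Lemma sup_list_le l t : 0 <= t -> (sup_list l <= t <-> forall r, In r l -> r <= t).
Proof.
  intros Ht. destruct l as [|a l]; simpl.
  - split; intros; [contradiction|lra].
  - induction l as [|b l IH]; simpl.
    + split; intros H. intros r [->|[]]; lra. apply H; auto.
    + rewrite Rmax_le_iff, IH. split.
      * intros [H1 H2] r [->|[->|Hr]]; auto.
      * intros H; split; [apply H; auto|]. intros r [->|Hr]; apply H; auto.
Qed.

Lemma inf_list_le l t : t < 1 -> (inf_list l <= t <-> exists r, In r l /\ r <= t).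
Proof.
  intros Ht. destruct l as [|a l]; simpl.
  - split; [lra|]. intros [r [[] _]].
  - induction l as [|b l IH]; simpl.
    + split. intros; exists a; auto. intros [r [[->|[]] H]]; auto.
    + rewrite Rmin_le_iff, IH. split.
      * intros [H|[r [Hr H]]]. exists b; auto. exists r. destruct Hr; auto.
      * intros [r [[->|[->|Hr]] H]]; auto. right; exists r; auto. right; exists r; auto.
Qed.

Lemma Rmax_P (P : R -> Prop) a b : P a -> P b -> P (Rmax a b).
Proof. unfold Rmax; destruct (Rle_dec a b); auto. Qed.
Lemma Rmin_P (P : R -> Prop) a b : P a -> P b -> P (Rmin a b).
Proof. unfold Rmin; destruct (Rle_dec a b); auto. Qed.

Lemma sup_list_S l : (forall r, In r l -> inS r) -> inS (sup_list l).
Proof.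
  destruct l as [|a l]; simpl; intros H. left; auto.
  induction l as [|b l IH]; simpl. auto.
  apply Rmax_P. apply H; simpl; auto. apply IH. intros r [->|Hr]; apply H; simpl; auto.
Qed.
Lemma inf_list_S l : (forall r, In r l -> inS r) -> inS (inf_list l).
Proof.
  destruct l as [|a l]; simpl; intros H. right; exists 0%nat; simpl; rewrite Rinv_1; auto.
  induction l as [|b l IH]; simpl. auto.
  apply Rmin_P. apply H; simpl; auto. apply IH. intros r [->|Hr]; apply H; simpl; auto.
Qed.

Section S.
Context {Sigma X : Type} (beta : X -> list ((Sigma * X) + nat)%type).

Lemma haus_le (e : letter_or_var Sigma X -> letter_or_var Sigma X -> R) A B t :
  0 <= t < 1 ->
  (hausdorff Sigma X e A B <= t <->
   (forall m, In m A -> exists n, In n B /\ e m n <= t) /\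
   (forall n, In n B -> exists m, In m A /\ e n m <= t)).
Proof.
  intros Ht. unfold hausdorff. rewrite Rmax_le_iff, !sup_list_le by lra.
  split.
  - intros [H1 H2]. split.
    + intros m Hm. assert (H := H1 _ (in_map (fun m => inf_list (map (fun n => e m n) B)) _ _ Hm)).
      simpl in H. apply inf_list_le in H; [|lra]. destruct H as [r [Hr Hle]].
      apply in_map_iff in Hr. destruct Hr as [n [<- Hn]]. eauto.
    + intros n Hn. assert (H := H2 _ (in_map (fun n => inf_list (map (fun m => e n m) A)) _ _ Hn)).
      simpl in H. apply inf_list_le in H; [|lra]. destruct H as [r [Hr Hle]].
      apply in_map_iff in Hr. destruct Hr as [m [<- Hm]]. eauto.
  - intros [H1 H2]. split.
    + intros r Hr. apply in_map_iff in Hr. destruct Hr as [m [<- Hm]].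
      apply inf_list_le. lra. destruct (H1 m Hm) as [n [Hn Hle]].
      exists (e m n). split; auto. apply in_map_iff. exists n; auto.
    + intros r Hr. apply in_map_iff in Hr. destruct Hr as [n [<- Hn]].
      apply inf_list_le. lra. destruct (H2 n Hn) as [m [Hm Hle]].
      exists (e n m). split; auto. apply in_map_iff. exists m; auto.
Qed.

Lemma lift_le d m n t : 0 <= t < 1 ->
  lift Sigma X d m n <= t ->
  (exists v, m = inr v /\ n = inr v) \/
  (exists a x' y', m = inl (a, x') /\ n = inl (a, y') /\ / 2 * d x' y' <= t).
Proof.
  intros Ht H. destruct m as [[a x']|v]; destruct n as [[b y']|w]; simpl in H; try lra.
  - destruct (excluded_middle_informative (a = b)) as [<-|]; [|lra].
    right. exists a, x', y'. auto.
  - destruct (Nat.eq_dec v w) as [<-|]; [|lra]. left; eauto.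
Qed.


Lemma phi_struct d x y k :
  Phi Sigma X beta d x y <= / 2 ^ S k ->
  sameE Sigma X beta x y /\
  (forall a x', In (inl (a, x')) (beta x) -> exists y', In (inl (a, y')) (beta y) /\ d x' y' <= / 2 ^ k) /\
  (forall a y', In (inl (a, y')) (beta y) -> exists x', In (inl (a, x')) (beta x) /\ d y' x' <= / 2 ^ k).
Proof.
  intros H. unfold Phi in H.
  assert (Ht : 0 <= / 2 ^ S k < 1).
  { rewrite inv2S. pose proof (inv2_pos k); pose proof (inv2_le1 k); lra. }
  apply haus_le in H; [|exact Ht]. destruct H as [H1 H2].
  assert (E : forall a : R, / 2 * a <= / 2 ^ S k -> a <= / 2 ^ k).
  { intros a. rewrite inv2S. lra. }
  split; [|split].
  - intros v; split; intros Hv.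
    + destruct (H1 _ Hv) as [n [Hn Hl]]. apply lift_le in Hl; [|exact Ht].
      destruct Hl as [[w [[= <-] ->]]|[a [x' [y' [[=] _]]]]]; auto.
    + destruct (H2 _ Hv) as [n [Hn Hl]]. apply lift_le in Hl; [|exact Ht].
      destruct Hl as [[w [[= <-] ->]]|[a [x' [y' [[=] _]]]]]; auto.
  - intros a x' Hx. destruct (H1 _ Hx) as [n [Hn Hl]]. apply lift_le in Hl; [|exact Ht].
    destruct Hl as [[w [[=] _]]|[b [x'' [y' [[= <- <-] [-> Hle]]]]]].
    exists y'. split; auto; eapply E; eauto.
  - intros a y' Hy. destruct (H2 _ Hy) as [n [Hn Hl]]. apply lift_le in Hl; [|exact Ht].
    destruct Hl as [[w [[=] _]]|[b [y'' [x' [[= <- <-] [-> Hle]]]]]].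
    exists x'. split; auto; eapply E; eauto.
Qed.

Lemma struct_phi d x y k :
  sameE Sigma X beta x y ->
  (forall a x', In (inl (a, x')) (beta x) -> exists y', In (inl (a, y')) (beta y) /\ d x' y' <= / 2 ^ k) ->
  (forall a y', In (inl (a, y')) (beta y) -> exists x', In (inl (a, x')) (beta x) /\ d y' x' <= / 2 ^ k) ->
  Phi Sigma X beta d x y <= / 2 ^ S k.
Proof.
  intros HE H1 H2. unfold Phi.
  assert (Ht : 0 <= / 2 ^ S k < 1).
  { rewrite inv2S. pose proof (inv2_pos k); pose proof (inv2_le1 k); lra. }
  apply haus_le; [exact Ht|]. split.
  - intros [[a x']|v] Hm.
    + destruct (H1 _ _ Hm) as [y' [Hy Hle]]. exists (inl (a, y')). split; auto.
      simpl. destruct (excluded_middle_informative (a = a)); [|congruence].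
      pose proof (inv2S k) as E2; simpl in E2 |- *; rewrite E2; lra.
    + exists (inr v). split. apply HE; auto. simpl. destruct (Nat.eq_dec v v); [|congruence]. apply Rlt_le, Rinv_0_lt_compat; pose proof (pow2_pos k); simpl; lra.
  - intros [[a y']|v] Hm.
    + destruct (H2 _ _ Hm) as [x' [Hx Hle]]. exists (inl (a, x')). split; auto.
      simpl. destruct (excluded_middle_informative (a = a)); [|congruence].
      pose proof (inv2S k) as E2; simpl in E2 |- *; rewrite E2; lra.
    + exists (inr v). split. apply HE; auto. simpl. destruct (Nat.eq_dec v v); [|congruence]. apply Rlt_le, Rinv_0_lt_compat; pose proof (pow2_pos k); simpl; lra.
Qed.

Lemma phi_struct_t d x y t : 0 <= t < 1 ->
  Phi Sigma X beta d x y <= t ->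
  sameE Sigma X beta x y /\
  (forall a x', In (inl (a, x')) (beta x) -> exists y', In (inl (a, y')) (beta y) /\ / 2 * d x' y' <= t) /\
  (forall a y', In (inl (a, y')) (beta y) -> exists x', In (inl (a, x')) (beta x) /\ / 2 * d y' x' <= t).
Proof.
  intros Ht H. unfold Phi in H.
  apply haus_le in H; [|exact Ht]. destruct H as [H1 H2].
  split; [|split].
  - intros v; split; intros Hv.
    + destruct (H1 _ Hv) as [n [Hn Hl]]. apply lift_le in Hl; [|exact Ht].
      destruct Hl as [[w [[= <-] ->]]|[a [x' [y' [[=] _]]]]]; auto.
    + destruct (H2 _ Hv) as [n [Hn Hl]]. apply lift_le in Hl; [|exact Ht].
      destruct Hl as [[w [[= <-] ->]]|[a [x' [y' [[=] _]]]]]; auto.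
  - intros a x' Hx. destruct (H1 _ Hx) as [n [Hn Hl]]. apply lift_le in Hl; [|exact Ht].
    destruct Hl as [[w [[=] _]]|[b [x'' [y' [[= <- <-] [-> Hle]]]]]].
    exists y'. auto.
  - intros a y' Hy. destruct (H2 _ Hy) as [n [Hn Hl]]. apply lift_le in Hl; [|exact Ht].
    destruct Hl as [[w [[=] _]]|[b [y'' [x' [[= <- <-] [-> Hle]]]]]].
    exists x'. auto.
Qed.

Lemma bisim_S n x y : bisim beta (S n) x y -> bisim beta n x y.
Proof.
  revert x y; induction n as [|n IH]; intros x y H. exact I.
  destruct H as [HE [H1 H2]]. split; auto. split.
  - intros a x' Hx. destruct (H1 _ _ Hx) as [y' [Hy Hb]]. eauto.
  - intros a y' Hy. destruct (H2 _ _ Hy) as [x' [Hx Hb]]. eauto.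
Qed.

Lemma bisim_le m n x y : (m <= n)%nat -> bisim beta n x y -> bisim beta m x y.
Proof. induction 1; auto. intros Hb; apply IHle, bisim_S, Hb. Qed.

Lemma bisim_refl n x : bisim beta n x x.
Proof.
  revert x; induction n as [|n IH]; intros x. exact I.
  split; [intros v; tauto|]. split; intros a z Hz; exists z; auto.
Qed.

Lemma bisim_sym n x y : bisim beta n x y -> bisim beta n y x.
Proof.
  revert x y; induction n as [|n IH]; intros x y H. exact I.
  destruct H as [HE [H1 H2]]. split; [intros v; split; apply HE|]. split.
  - intros a y' Hy. destruct (H2 _ _ Hy) as [x' [Hx Hb]]. eauto.
  - intros a x' Hx. destruct (H1 _ _ Hx) as [y' [Hy Hb]]. eauto.
Qed.

Lemma bisim_trans n x y z : bisim beta n x y -> bisim beta n y z -> bisim beta n x z.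
Proof.
  revert x y z; induction n as [|n IH]; intros x y z H G. exact I.
  destruct H as [HE [H1 H2]]. destruct G as [GE [G1 G2]].
  split; [intros v; rewrite (HE v); apply GE|]. split.
  - intros a x' Hx. destruct (H1 _ _ Hx) as [y' [Hy Hb]].
    destruct (G1 _ _ Hy) as [z' [Hz Hc]]. eauto.
  - intros a z' Hz. destruct (G2 _ _ Hz) as [y' [Hy Hb]].
    destruct (H2 _ _ Hy) as [x' [Hx Hc]]. eauto.
Qed.

Lemma fix_strict d : (forall x y, 0 <= d x y) -> (forall x y, Phi Sigma X beta d x y = d x y) ->
  forall k x y, d x y < / 2 ^ k -> bisim beta (S k) x y.
Proof.
  intros Hpos Hfix. induction k as [|k IH]; intros x y H.
  - assert (Ht : 0 <= d x y < 1) by (simpl in H; rewrite Rinv_1 in H; split; auto).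
    destruct (phi_struct_t d x y (d x y) Ht (Req_le _ _ (Hfix x y))) as [HE [H1 H2]].
    simpl. split; auto. split.
    + intros a x' Hx. destruct (H1 _ _ Hx) as [y' [Hy _]]. eauto.
    + intros a y' Hy. destruct (H2 _ _ Hy) as [x' [Hx _]]. eauto.
  - assert (Ht : 0 <= d x y < 1).
    { split; auto. pose proof (inv2_le1 (S k)). lra. }
    destruct (phi_struct_t d x y (d x y) Ht (Req_le _ _ (Hfix x y))) as [HE [H1 H2]].
    rewrite inv2S in H.
    change (bisim beta (S (S k)) x y) with
      (sameE Sigma X beta x y /\
      (forall (a : Sigma) (x' : X), In (inl (a, x')) (beta x) ->
         exists y' : X, In (inl (a, y')) (beta y) /\ bisim beta (S k) x' y') /\
      (forall (a : Sigma) (y' : X), In (inl (a, y')) (beta y) ->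
         exists x' : X, In (inl (a, x')) (beta x) /\ bisim beta (S k) x' y')).
    split; auto. split.
    + intros a x' Hx. destruct (H1 _ _ Hx) as [y' [Hy Hl]]. exists y'. split; auto.
      apply IH. lra.
    + intros a y' Hy. destruct (H2 _ _ Hy) as [x' [Hx Hl]]. exists x'. split; auto.
      apply bisim_sym, IH. lra.
Qed.

Lemma least_ex (P : nat -> Prop) : (exists n, P n) -> exists n, P n /\ forall m, P m -> (n <= m)%nat.
Proof.
  intros [n Hn]. apply NNPP; intros Hno.
  assert (A : forall k m, (m <= k)%nat -> ~ P m).
  { induction k as [|k IH]; intros m Hm Pm.
    - apply Hno. exists m. split; auto. intros; lia.
    - apply Hno. exists m. split; auto. intros m' Pm'.
      destruct (le_lt_dec m m'); auto. exfalso. apply (IH m'); auto; lia. }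
  exact (A n n (le_n n) Hn).
Qed.

Definition dstar (x y : X) : R :=
  match excluded_middle_informative (exists n, ~ bisim beta (S n) x y) with
  | left H => / 2 ^ (proj1_sig (constructive_indefinite_description _ (least_ex _ H)))
  | right _ => 0
  end.

Lemma dstar_spec x y : inS (dstar x y) /\ forall k, dstar x y <= / 2 ^ k <-> bisim beta k x y.
Proof.
  unfold dstar. destruct (excluded_middle_informative _) as [H|H].
  - destruct (constructive_indefinite_description _ _) as [N [HN Hmin]]. simpl.
    assert (BN : bisim beta N x y).
    { destruct N. exact I. apply NNPP; intros C. specialize (Hmin N C). lia. }
    split. right; eauto.
    intros k. split; intros Hk.
    + destruct (le_lt_dec k N) as [h|h]. eapply bisim_le; eauto.
      exfalso. pose proof (inv2_anti (S N) k h). rewrite inv2S in H0.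
      pose proof (inv2_pos N). lra.
    + destruct (le_lt_dec k N) as [h|h]. apply inv2_anti; auto.
      exfalso. apply HN. eapply bisim_le; eauto.
  - split. left; auto. intros k. split; intros _.
    + destruct k. exact I. apply NNPP; intros C. apply H; eauto.
    + left; apply inv2_pos.
Qed.

Lemma lift_S m n : inS (lift Sigma X dstar m n).
Proof.
  assert (one : inS 1) by (right; exists 0%nat; simpl; rewrite Rinv_1; auto).
  destruct m as [[a x']|v]; destruct n as [[b y']|w]; simpl; auto.
  - destruct (excluded_middle_informative (a = b)); auto.
    destruct (proj1 (dstar_spec x' y')) as [->|[j ->]].
    left; ring. right; exists (S j). rewrite inv2S; auto.
  - destruct (Nat.eq_dec v w). left; auto. auto.
Qed.

Lemma Phi_S x y : inS (Phi Sigma X beta dstar x y).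
Proof.
  unfold Phi, hausdorff. apply Rmax_P; apply sup_list_S; intros r Hr;
  apply in_map_iff in Hr; destruct Hr as [m [<- _]]; apply inf_list_S;
  intros r Hr; apply in_map_iff in Hr; destruct Hr as [n [<- _]]; apply lift_S.
Qed.

Lemma Phi_dstar_thr x y k : Phi Sigma X beta dstar x y <= / 2 ^ k <-> bisim beta k x y.
Proof.
  destruct k as [|k].
  - split; intros _. exact I. simpl; rewrite Rinv_1. apply inS_le1, Phi_S.
  - split; intros H.
    + destruct (phi_struct dstar x y k H) as [HE [H1 H2]].
      split; auto. split.
      * intros a x' Hx. destruct (H1 _ _ Hx) as [y' [Hy Hl]]. exists y'. split; auto.
        apply (proj2 (dstar_spec x' y')); auto.
      * intros a y' Hy. destruct (H2 _ _ Hy) as [x' [Hx Hl]]. exists x'. split; auto.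
        apply bisim_sym. apply (proj2 (dstar_spec y' x')); auto.
    + destruct H as [HE [H1 H2]]. apply struct_phi; auto.
      * intros a x' Hx. destruct (H1 _ _ Hx) as [y' [Hy Hl]]. exists y'. split; auto.
        apply (proj2 (dstar_spec x' y')); auto.
      * intros a y' Hy. destruct (H2 _ _ Hy) as [x' [Hx Hl]]. exists x'. split; auto.
        apply (proj2 (dstar_spec y' x')). apply bisim_sym; auto.
Qed.

Lemma dstar_eq a b : inS a -> inS b -> (forall k, a <= / 2 ^ k <-> b <= / 2 ^ k) -> a = b.
Proof.
  intros Ha Hb H. apply Rle_antisym; apply inS_le; auto; intros k; apply H.
Qed.

Lemma dstar_pm : is_pm X dstar.
Proof.
  split; [|split; [|split]].
  - intros x y. apply inS_le1, dstar_spec.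
  - intros x. apply dstar_eq. apply dstar_spec. left; auto.
    intros k. rewrite (proj2 (dstar_spec x x)). split; intros; [left; apply inv2_pos|apply bisim_refl].
  - intros x y. apply dstar_eq; try apply dstar_spec.
    intros k. rewrite (proj2 (dstar_spec x y)), (proj2 (dstar_spec y x)).
    split; apply bisim_sym.
  - intros x y z.
    assert (Hm : inS (Rmax (dstar x y) (dstar y z))) by (apply Rmax_P; apply dstar_spec).
    assert (dstar x z <= Rmax (dstar x y) (dstar y z)).
    { apply inS_le; [apply dstar_spec|auto|]. intros k Hk. apply Rmax_le_iff in Hk.
      apply dstar_spec. apply bisim_trans with y; apply dstar_spec; tauto. }
    pose proof (inS_le1 _ (proj1 (dstar_spec x y))). pose proof (inS_le1 _ (proj1 (dstar_spec y z))).
    unfold Rmax in *. destruct (Rle_dec _ _); lra.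
Qed.

Lemma dstar_fix x y : Phi Sigma X beta dstar x y = dstar x y.
Proof.
  apply dstar_eq. apply Phi_S. apply dstar_spec.
  intros k. rewrite Phi_dstar_thr. symmetry. apply dstar_spec.
Qed.

Lemma dstar_least d' : is_pm X d' -> (forall x y, Phi Sigma X beta d' x y = d' x y) ->
  forall x y, dstar x y <= d' x y.
Proof.
  intros [Hb [_ [_ _]]] Hfix x y. apply Rnot_lt_le. intros Hlt.
  destruct (proj1 (dstar_spec x y)) as [E|[j E]].
  - rewrite E in Hlt. specialize (Hb x y). lra.
  - rewrite E in Hlt. apply fix_strict in Hlt; auto; [|intros; apply Hb].
    apply (proj2 (dstar_spec x y)) in Hlt. rewrite E, inv2S in Hlt.
    pose proof (inv2_pos j). lra.
Qed.

Lemma dstar_lfp : is_lfp Sigma X beta dstar.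
Proof. split; [apply dstar_pm|split; [apply dstar_fix|apply dstar_least]]. Qed.

End S.

Theorem mainTheorem3 (Sigma X : Type) (beta : X -> list ((Sigma * X) + nat)%type)
  (x y : X) (k : nat) :
  bisim beta k x y <-> bd beta x y <= / 2 ^ k.
Proof.
  assert (L : is_lfp Sigma X beta (bd beta)).
  { unfold bd. apply epsilon_spec. exists (dstar beta). apply dstar_lfp. }
  destruct L as [[Hb [_ [Hsym _]]] [Hfix Hleast]].
  split; intros H.
  - apply Rle_trans with (dstar beta x y).
    + apply Hleast. apply dstar_pm. apply dstar_fix.
    + apply dstar_spec; auto.
  - destruct k as [|k]. exact I.
    apply (fix_strict beta (bd beta)); auto. intros; apply Hb.
    rewrite inv2S in H. pose proof (inv2_pos k). lra.
Qed.
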